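(* For every planar graph $H$ there is a constant $c(H)$ such that every graph $G$ with $\operatorname{box}(G)\ge c(H)$ has a minor isomorphic to $H$.
   Context: The boxicity $\operatorname{box}(G)$ is the minimum $b$ such that $G$ is the intersection graph of axis-parallel boxes in $\mathbb{R}^b$ (products of $b$ closed intervals), one box per vertex. A minor of $G$ is a graph obtained from a subgraph of $G$ by contracting edges. *)

(* Defs.v *)
From HB Require Import structures.
From mathcomp Require Import all_boot all_order all_algebra.
From mathcomp Require Import all_classical all_reals all_analysis.
From mathcomp Require Import Rstruct Rstruct_topology.
Set Implicit Arguments. Unset Strict Implicit. Unset Printing Implicit Defensive.
Import Order.TTheory GRing.Theory Num.Theory.
Local Open Scope ring_scope.


Notation RR := Rdefinitions.R.

Definition simple_graph (V : finType) (E : rel V) : Prop :=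
  symmetric E /\ irreflexive E.

(* G is the intersection graph of axis-parallel boxes in R^b: vertex v gets the
   box prod_i [l v i, r v i]; distinct u, v are adjacent iff their boxes meet. *)
Definition box_rep (V : finType) (E : rel V) (b : nat) : Prop :=
  exists l r : V -> 'I_b -> RR,
    (forall v i, l v i <= r v i) /\
    (forall u v, u != v ->
       (E u v <-> exists x : 'I_b -> RR,
          forall i, (l u i <= x i <= r u i) /\ (l v i <= x i <= r v i))).

Definition boxicity_ge (V : finType) (E : rel V) (c : nat) : Prop :=
  forall b, box_rep E b -> (c <= b)%N.

(* H is (isomorphic to) a minor of G: a minor model by branch sets, i.e.
   pairwise disjoint nonempty vertex sets inducing connected subgraphs of G,
   with an edge of G between the branch sets of every edge of H. *)
Definition induced_conn (V : finType) (E : rel V) (S : {set V}) : Prop :=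
  forall u v, u \in S -> v \in S ->
    connect [rel a b | [&& E a b, a \in S & b \in S]] u v.

Definition is_minor (VH : finType) (EH : rel VH) (VG : finType) (EG : rel VG)
  : Prop :=
  exists phi : VH -> {set VG},
    [/\ forall x, phi x != finset.set0,
        forall x, induced_conn EG (phi x),
        forall x y, x != y -> [disjoint phi x & phi y]
      & forall x y, EH x y ->
          exists u v, [/\ u \in phi x, v \in phi y & EG u v]].

(* Planarity: a drawing in the plane R x R with distinct points for vertices and,
   for each edge, a simple arc (continuous injective map on [0,1]) joining its
   endpoints, whose interior avoids all vertex points and interiors of other
   edges' arcs. The arc for {u,v} is arc u v (arc v u is ignored as a separate
   edge: disjointness is only required between different unordered pairs). *)
Definition unit_interval : set RR := [set t | 0 <= t <= 1]%classic.

Definition planar (V : finType) (E : rel V) : Prop :=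
  exists (p : V -> RR * RR) (arc : V -> V -> RR -> RR * RR),
    [/\ injective p,
        (forall u v, E u v ->
           [/\ {within unit_interval, continuous (arc u v)}%classic,
               {in unit_interval &, injective (arc u v)},
               arc u v 0 = p u & arc u v 1 = p v]),
        (forall u v w t, E u v -> 0 < t < 1 -> arc u v t <> p w)
      & (forall u v u' v' s t, E u v -> E u' v' ->
           ~~ ((u == u') && (v == v') || (u == v') && (v == u')) ->
           0 < s < 1 -> 0 < t < 1 -> arc u v s <> arc u' v' t)].

(* Main.v *)
Require Import Defs.
From mathcomp Require Import all_boot.
From mathcomp Require Import zify.
Set Implicit Arguments. Unset Strict Implicit. Unset Printing Implicit Defensive.


Section Graphs.
Variable V : finType.
Implicit Types (E : rel V) (R S N : {set V}).

Definition nb E R u := [set w in R | E u w].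
Definition deg E R u := #|nb E R u|.
Definition ne E R := \sum_(u in R) deg E R u.
Definition kmin E R m := exists phi : 'I_m -> {set V},
  [/\ forall i, phi i != set0, forall i, phi i \subset R,
      forall i, induced_conn E (phi i),
      forall i j, i != j -> [disjoint phi i & phi j]
    & forall i j, i != j -> exists u v, [/\ u \in phi i, v \in phi j & E u v]].

Lemma connect_closed (e : rel V) (P : V -> Prop) x y :
  (forall a b, P a -> e a b -> P b) -> connect e x y -> P x -> P y.
Proof.
move=> H /connectP [p pth ->]; elim: p x pth => //= z p IH x /andP [exz pth] Px.
exact: IH pth (H _ _ Px exz).
Qed.

Lemma card_bigcup_le (I : finType) (A : {pred I}) (F : I -> {set V}) :
  #|\bigcup_(i in A) F i| <= \sum_(i in A) #|F i|.
Proof.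
apply: (big_ind2 (fun (X : {set V}) n => #|X| <= n)) => //.
  by rewrite cards0.
move=> X1 n1 X2 n2 h1 h2; apply: leq_trans (leq_card_setU X1 X2) _.
exact: leq_add.
Qed.

Lemma sum_ind_le (A C : {set V}) : \sum_(u in A) (u \in C) <= #|C|.
Proof.
rewrite -sum1_card big_mkcond [X in _ <= X]big_mkcond /=.
apply: leq_sum => u _; by case: (u \in A); case: (u \in C).
Qed.

Lemma star_conn E (A : {set V}) c : symmetric E -> c \in A ->
  (forall a, a \in A -> a != c -> E c a) -> induced_conn E A.
Proof.
move=> sE cA H u v uA vA.
set F := [rel a b | [&& E a b, a \in A & b \in A]].
have Fc : forall a, a \in A -> connect F c a.
  move=> a aA; case: (eqVneq a c) => [->|ac]; first exact: connect0.
  by apply: connect1; rewrite /= H // cA aA.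
have Fsym : connect_sym F.
  apply: sym_connect_sym => a b /=; rewrite sE.
  by case: (a \in A); case: (b \in A); rewrite ?andbF ?andbT.
apply: (connect_trans _ (Fc v vA)); rewrite Fsym; exact: Fc.
Qed.

Lemma lift_kmin E R0 E' R (B : V -> {set V}) m :
  symmetric E ->
  (forall u, u \in R -> u \in B u) ->
  (forall u, u \in R -> B u \subset R0) ->
  (forall u, u \in R -> induced_conn E (B u)) ->
  (forall u w, u \in R -> w \in R -> u != w -> [disjoint B u & B w]) ->
  (forall u w, u \in R -> w \in R -> E' u w ->
     exists a b, [/\ a \in B u, b \in B w & E a b]) ->
  kmin E' R m -> kmin E R0 m.
Proof.
move=> sE Bin BR Bc Bd BE [phi [ne0 sR cn dj adj]].
exists (fun i => \bigcup_(u in phi i) B u); split.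
- move=> i; have /set0Pn [u ui] := ne0 i.
  apply/set0Pn; exists u; apply/bigcupP; exists u => //.
  apply: Bin; exact: (subsetP (sR i)).
- move=> i; apply/bigcupsP => u ui; apply: BR; exact: (subsetP (sR i)).
- move=> i a b /bigcupP [u ui au] /bigcupP [w wi bw].
  set F := [rel x y | [&& E x y, x \in \bigcup_(u in phi i) B u
                                 & y \in \bigcup_(u in phi i) B u]].
  have inB : forall z c, z \in phi i -> c \in B z -> c \in \bigcup_(u in phi i) B u.
    by move=> z c zi cz; apply/bigcupP; exists z.
  have sub : forall z c d, z \in phi i -> c \in B z -> d \in B z -> connect F c d.
    move=> z c d zi cz dz; have := Bc z (subsetP (sR i) z zi) c d cz dz.
    apply: connect_sub => x y /= /and3P [exy xz yz]; apply: connect1.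
    by rewrite /= exy (inB z x) ?(inB z y).
  pose P z := z \in phi i -> forall d, d \in B z -> connect F a d.
  have : P w.
    apply: (connect_closed (e := [rel x y | [&& E' x y, x \in phi i & y \in phi i]]) (P := P) _ (cn i u w ui wi)).
      move=> z z' Pz /= /and3P [ezz zi z'i] _ d dz'.
      have [a1 [b1 [a1z b1z eab]]] := BE z z' (subsetP (sR i) z zi) (subsetP (sR i) z' z'i) ezz.
      apply: (connect_trans (Pz zi a1 a1z)).
      apply: (connect_trans _ (sub z' b1 d z'i b1z dz')).
      by apply: connect1; rewrite /= eab (inB z a1) ?(inB z' b1).
    by move=> _ d du; exact: sub u a d ui au du.
  by move/(_ wi b bw).
- move=> i j ij; rewrite -setI_eq0; apply/eqP/setP => x; rewrite inE in_set0.
  apply/negbTE/andP => -[/bigcupP [u ui xu] /bigcupP [w wj xw]].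
  have uw : u != w.
    by apply/eqP => uw; move: (disjointFr (dj i j ij) ui); rewrite uw wj.
  have uR := subsetP (sR i) u ui; have wR := subsetP (sR j) w wj.
  by move: (disjointFr (Bd u w uR wR uw) xu); rewrite xw.
- move=> i j ij; have [u [w [ui wj euw]]] := adj i j ij.
  have [a [b [au bw eab]]] := BE u w (subsetP (sR i) u ui) (subsetP (sR j) w wj) euw.
  by exists a, b; split => //; apply/bigcupP; [exists u | exists w].
Qed.

Lemma ext_kmin E R N x m : symmetric E -> kmin E N m -> x \in R -> x \notin N ->
  N \subset R -> (forall z, z \in N -> E x z) -> kmin E R m.+1.
Proof.
move=> sE [phi [ne0 sN cn dj adj]] xR xN NR Ex.
exists (fun i => if unlift ord_max i is Some j then phi j else [set x]); split.
- move=> i; case: unliftP => [j _|_]; first exact: ne0.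
  by apply/set0Pn; exists x; exact: set11.
- move=> i; case: unliftP => [j _|_]; first exact: subset_trans (sN j) NR.
  by rewrite sub1set.
- move=> i; case: unliftP => [j _|_]; first exact: cn.
  by move=> a b /set1P -> /set1P ->; exact: connect0.
- move=> i k; case: unliftP => [j ->|->]; case: unliftP => [l ->|->].
  + by move=> h; apply: dj; apply: contraNneq h => ->.
  + move=> _; rewrite disjoint_sym disjoints1; apply: contra xN.
    exact: (subsetP (sN j)).
  + move=> _; rewrite disjoints1; apply: contra xN.
    exact: (subsetP (sN l)).
  + by rewrite eqxx.
- move=> i k; case: unliftP => [j ->|->]; case: unliftP => [l ->|->].
  + by move=> h; apply: adj; apply: contraNneq h => ->.
  + move=> _; have /set0Pn [z zj] := ne0 j.
    by exists z, x; rewrite set11 zj sE Ex // (subsetP (sN j)).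
  + move=> _; have /set0Pn [z zl] := ne0 l.
    by exists x, z; rewrite set11 zl Ex // (subsetP (sN l)).
  + by rewrite eqxx.
Qed.

Lemma kmin0 E R : kmin E R 0.
Proof. by exists (fun _ => set0); split => -[]. Qed.

End Graphs.


Section Mader.
Variable V : finType.
Implicit Types (E : rel V) (R S N : {set V}).

Definition contr E x y : rel V := fun p q =>
  (p != q) && [|| E p q, (p == x) && E y q | (q == x) && E p y].

Lemma contr_sym E x y : symmetric E -> symmetric (contr E x y).
Proof.
move=> sE p q; rewrite /contr eq_sym (sE q p) (sE y p) (sE q y).
by case: (p != q); case: (E p q); case: ((p == x) && E y q); case: ((q == x) && E p y).
Qed.

Lemma contr_irr E x y : irreflexive (contr E x y).
Proof. by move=> p; rewrite /contr eqxx. Qed.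

Lemma deg_contr_u E R x y u : symmetric E -> irreflexive E -> x \in R -> y \in R ->
  u \in R :\ y -> u != x ->
  deg E R u <= deg (contr E x y) (R :\ y) u + (u \in nb E R x :&: nb E R y).
Proof.
move=> sE iE xR yR uR' ux.
have uR : u \in R by move: uR'; rewrite !inE => /andP [_ ->].
have uy : u != y by move: uR'; rewrite !inE => /andP [-> _].
have sub1 : nb E R u :\ y \subset nb (contr E x y) (R :\ y) u.
  apply/subsetP => w; rewrite !inE => /and3P [wy wR euw].
  have uw : u != w by apply: contraTneq euw => ->; rewrite iE.
  by rewrite wy wR /contr uw euw.
rewrite /deg (cardsD1 y (nb E R u)).
case Euy: (E u y).
- rewrite inE yR Euy /=.
  case Eux: (E u x).
  + have -> : u \in nb E R x :&: nb E R y by rewrite !inE uR sE Eux sE Euy.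
    by have := subset_leq_card sub1; lia.
  + have xin : x \in nb (contr E x y) (R :\ y) u.
      have xy : x != y by apply: contraTneq Euy => <-; rewrite Eux.
      by rewrite !inE xy xR /contr ux eqxx Euy !orbT.
    have sub2 : nb E R u :\ y \subset nb (contr E x y) (R :\ y) u :\ x.
      apply/subsetP => w wi; rewrite in_setD1 (subsetP sub1 _ wi) andbT.
      by apply: contraTneq wi => ->; rewrite !inE Eux !andbF.
    rewrite [X in _ <= X + _](cardsD1 x) xin.
    by have := subset_leq_card sub2; lia.
- rewrite inE Euy andbF /=.
  by have := subset_leq_card sub1; lia.
Qed.

Lemma deg_contr_x E R x y : symmetric E -> irreflexive E -> x \in R -> y \in R ->
  E x y ->
  deg E R x + deg E R y <= deg (contr E x y) (R :\ y) x + 2 + #|nb E R x :&: nb E R y|.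
Proof.
move=> sE iE xR yR exy.
rewrite /deg -cardsUI.
set A := nb E R x :|: nb E R y.
have sub : A :\ x :\ y \subset nb (contr E x y) (R :\ y) x.
  apply/subsetP => w; rewrite !inE => /and3P [wy wx /orP [] /andP [wR e]];
    by rewrite wy wR /contr eq_sym wx e ?eqxx ?orbT.
rewrite (cardsD1 x A) (cardsD1 y (A :\ x)).
have := subset_leq_card sub; have := leq_b1 (x \in A); have := leq_b1 (y \in A :\ x).
lia.
Qed.

Lemma ne_contr E R x y : symmetric E -> irreflexive E -> x \in R -> y \in R -> E x y ->
  ne E R <= ne (contr E x y) (R :\ y) + 2 + 2 * #|nb E R x :&: nb E R y|.
Proof.
move=> sE iE xR yR exy.
have xy : x != y by apply: contraTneq exy => ->; rewrite iE.
have xR' : x \in R :\ y by rewrite !inE xy xR.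
set C := nb E R x :&: nb E R y.
rewrite /ne (bigD1 y) //=.
rewrite (eq_bigl (fun u => u \in R :\ y)); last by move=> u; rewrite in_setD1 andbC.
rewrite (bigD1 x) //= [X in _ <= X + _ + _](bigD1 x) //=.
have h1 : \sum_(i in R :\ y | i != x) deg E R i <=
   \sum_(i in R :\ y | i != x) deg (contr E x y) (R :\ y) i + \sum_(i in R :\ y :\ x) (i \in C).
  rewrite [X in _ <= _ + X](eq_bigl (fun i => (i \in R :\ y) && (i != x))); last first.
    by move=> u; rewrite in_setD1 andbC.
  rewrite -big_split /=.
  apply: leq_sum => u /andP [uR ux].
  exact: deg_contr_u.
have h2 := sum_ind_le (R :\ y :\ x) C.
have h3 := deg_contr_x sE iE xR yR exy.
move: h3; rewrite -/C => h3; lia.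
Qed.

Lemma card_gt0_set R : R != set0 -> 0 < #|R|.
Proof. by rewrite card_gt0. Qed.

Lemma mader t : forall E R, symmetric E -> irreflexive E -> R != set0 ->
  2 ^ t * #|R| <= ne E R -> kmin E R t.+1.
Proof.
elim: t => [|t IHt].
  move=> E R sE iE /set0Pn [x xR] _.
  apply: (@ext_kmin V E R set0 x 0 sE (kmin0 E set0) xR).
  - by rewrite inE.
  - exact: sub0set.
  - by move=> z; rewrite inE.
move=> E R sE iE; move: {2}#|R| (leqnn #|R|) => n.
elim: n E R sE iE => [|n IHn] E R sE iE hR R0 hne.
  by move: (card_gt0_set R0); rewrite leqn0 in hR; rewrite (eqP hR).
case: (boolP [exists x, exists y, [&& x \in R, y \in R, E x y &
                 #|nb E R x :&: nb E R y| < 2 ^ t]]).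
- move=> /existsP [x /existsP [y /and4P [xR yR exy hc]]].
  have xy : x != y by apply: contraTneq exy => ->; rewrite iE.
  have xR' : x \in R :\ y by rewrite !inE xy xR.
  pose B z := if z == x then [set x; y] else [set z].
  have Bin : forall u, u \in B u.
    by move=> u; rewrite /B; case: ifP => [/eqP ->|_]; rewrite !inE eqxx.
  have Bx : B x = [set x; y] by rewrite /B eqxx.
  have Bu : forall u, u != x -> B u = [set u] by move=> u ux; rewrite /B (negbTE ux).
  apply: (lift_kmin (E' := contr E x y) (R := R :\ y) (B := B)) => //.
  + move=> u; rewrite !inE => /andP [_ uR]; case: (eqVneq u x) => [->|ux].
      by rewrite Bx; apply/subsetP => w; rewrite !inE => /orP [] /eqP ->.
    by rewrite Bu // sub1set.
  + move=> u _; case: (eqVneq u x) => [->|ux].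
      rewrite Bx; apply: (star_conn (c := x)) => //; first by rewrite !inE eqxx.
      by move=> a; rewrite !inE => /orP [] /eqP -> //; rewrite eqxx.
    rewrite Bu //; apply: (star_conn (c := u)) => //; first by rewrite !inE.
    by move=> a; rewrite !inE => ->.
  + move=> u w; rewrite !inE => /andP [uy _] /andP [wy _] uw.
    case: (eqVneq u x) => [ux|ux]; case: (eqVneq w x) => [wx|wx].
    * by move: uw; rewrite ux wx eqxx.
    * rewrite ux Bx Bu // disjoint_sym disjoints1 !inE negb_or.
      by rewrite wx wy.
    * rewrite wx Bx Bu // disjoints1 !inE negb_or.
      by rewrite ux uy.
    * by rewrite (Bu u) // (Bu w) // disjoints1 !inE.
  + move=> u w _ _ /andP [_ /or3P [e|/andP [/eqP ux e]|/andP [/eqP wx e]]].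
    * by exists u, w; rewrite !Bin.
    * by exists y, w; rewrite ux Bx !inE eqxx orbT Bin.
    * by exists u, y; rewrite wx Bx !inE eqxx orbT Bin.
  + apply: IHn.
    * exact: contr_sym.
    * exact: contr_irr.
    * by have := cardsD1 y R; rewrite yR /=; lia.
    * by apply/set0Pn; exists x.
    * have := ne_contr sE iE xR yR exy; have := cardsD1 y R; rewrite yR /=.
      move: hne; rewrite !expnS => hne; nia.
- move=> nobad.
  case: (boolP [exists x in R, 0 < deg E R x]) => [/exists_inP [x xR dx]|/exists_inPn h].
    have /set0Pn [y yN] : nb E R x != set0 by rewrite -card_gt0.
    have kN : kmin E (nb E R x) t.+1.
      apply: IHt => //; first by apply/set0Pn; exists y.
      rewrite /ne mulnC -sum_nat_const; apply: leq_sum => z zN.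
      have zR : z \in R by move: zN; rewrite inE => /andP [].
      have exz : E x z by move: zN; rewrite inE => /andP [].
      move/existsPn: nobad => /(_ x) /existsPn /(_ z); rewrite xR zR exz /= -leqNgt.
      move/leq_trans; apply; apply: subset_leq_card; apply/subsetP => w.
      by rewrite !inE; case: (w \in R); case: (E x w).
    apply: (@ext_kmin V E R (nb E R x) x t.+1 sE kN xR).
    + by rewrite inE iE andbF.
    + by apply/subsetP => z; rewrite inE => /andP [].
    + by move=> z; rewrite inE => /andP [].
  have : ne E R = 0.
    by apply: big1 => u uR; have := h u uR; rewrite lt0n negbK => /eqP.
  move=> h0; move: hne; rewrite h0 leqn0 muln_eq0 expn_eq0 /=.
  by rewrite -card_gt0 in R0; rewrite eqn0Ngt R0.
Qed.

Lemma sparse t E R : symmetric E -> irreflexive E -> ~ kmin E R t.+1 ->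
  ne E R <= 2 ^ t * #|R|.
Proof.
move=> sE iE nk; case: (eqVneq R set0) => [->|R0].
  by rewrite /ne big_set0.
rewrite leqNgt; apply/negP => /ltnW h; apply: nk; exact: mader.
Qed.

Lemma low_deg E S D : S != set0 -> ne E S <= D * #|S| ->
  exists2 u, u \in S & deg E S u <= D.
Proof.
move=> S0 h; case: (boolP [exists u in S, deg E S u <= D]) => [/exists_inP [u uS du]|/exists_inPn hn].
  by exists u.
have : \sum_(u in S) D.+1 <= ne E S.
  by apply: leq_sum => u uS; have := hn u uS; rewrite -ltnNge.
rewrite sum_nat_const; move: S0; rewrite -card_gt0 => S0.
nia.
Qed.

End Mader.


Section Orient.
Variable V : finType.
Implicit Types (E : rel V) (R S N : {set V}).

Lemma sub_kmin E S R m : kmin E S m -> S \subset R -> kmin E R m.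
Proof.
move=> [phi [h1 h2 h3 h4 h5]] SR; exists phi; split => // i.
exact: subset_trans (h2 i) SR.
Qed.

Lemma card_sum S (P : pred V) : #|[set w in S | P w]| = \sum_(w in S) P w.
Proof.
rewrite -sum1_card big_mkcond [RHS]big_mkcond; apply: eq_bigr => w _.
by rewrite inE; case: (w \in S); case: (P w).
Qed.

Lemma double_count S (P : V -> V -> bool) :
  \sum_(u in S) #|[set w in S | P u w]| = \sum_(w in S) #|[set u in S | P u w]|.
Proof.
under eq_bigr do rewrite card_sum.
rewrite exchange_big /=; apply: eq_bigr => w _; by rewrite card_sum.
Qed.

Lemma orient E d : symmetric E -> irreflexive E ->
  (forall S, S != set0 -> exists2 u, u \in S & deg E S u <= d) ->
  exists o : rel V, [/\ forall u v, o u v -> E u v,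
     forall u v, E u v -> o u v || o v u,
     forall u v, o u v -> ~~ o v u
   & forall v, #|[set u | o u v]| <= d].
Proof.
move=> sE iE hd.
suff : forall n S, #|S| <= n -> exists o : rel V,
   [/\ forall u v, o u v -> [&& E u v, u \in S & v \in S],
     forall u v, u \in S -> v \in S -> E u v -> o u v || o v u,
     forall u v, o u v -> ~~ o v u
   & forall v, #|[set u | o u v]| <= d].
  move=> /(_ #|[set: V]| setT (leqnn _)) [o [h1 h2 h3 h4]]; exists o; split => //.
    by move=> u v /h1 /andP [].
  by move=> u v; apply: h2; rewrite inE.
have base : forall S, S = set0 -> exists o : rel V,
   [/\ forall u v, o u v -> [&& E u v, u \in S & v \in S],
     forall u v, u \in S -> v \in S -> E u v -> o u v || o v u,
     forall u v, o u v -> ~~ o v u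
   & forall v, #|[set u | o u v]| <= d].
  move=> S ->; exists (fun _ _ => false); split => //.
    by move=> u v; rewrite inE.
  by move=> v; rewrite (_ : [set u | false] = set0) ?cards0 //; apply/setP => u; rewrite !inE.
elim=> [|n IH] S hS.
  by apply: base; apply/eqP; rewrite -cards_eq0 -leqn0.
case: (eqVneq S set0) => [S0|S0]; first exact: base.
have [u0 u0S du0] := hd S S0.
have hS' : #|S :\ u0| <= n by have := cardsD1 u0 S; rewrite u0S /=; lia.
have [o [h1 h2 h3 h4]] := IH _ hS'.
have oS' : forall a b, o a b -> (a \in S :\ u0) && (b \in S :\ u0).
  by move=> a b /h1 /and3P [_ -> ->].
exists (fun a b => o a b || [&& b == u0, a \in S :\ u0 & E a u0]); split.
- move=> u v /orP [/h1 /and3P [e uS vS] | /and3P [/eqP -> uS e]].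
    by rewrite e; move: uS vS; rewrite !inE => /andP [_ ->] /andP [_ ->].
  by rewrite e u0S; move: uS; rewrite !inE => /andP [_ ->].
- move=> u v uS vS e.
  case: (eqVneq u u0) => [eu|nu]; case: (eqVneq v u0) => [ev|nv].
  + by move: e; rewrite eu ev iE.
  + by rewrite eu ?eqxx !inE nv vS sE -eu e !orbT.
  + by rewrite ev ?eqxx !inE nu uS -ev e !orbT.
  + have uS' : u \in S :\ u0 by rewrite !inE nu uS.
    have vS' : v \in S :\ u0 by rewrite !inE nv vS.
    by have /orP [->|->] := h2 u v uS' vS' e; rewrite ?orbT.
- move=> u v /orP [ouv | /and3P [/eqP ev uS e]].
    rewrite negb_or (h3 _ _ ouv) /=; apply/negP => /and3P [/eqP eu _ _].
    by move: (oS' _ _ ouv); rewrite eu !inE eqxx.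
  rewrite negb_or; apply/andP; split.
    by apply/negP => /oS' /andP [vS _]; move: vS; rewrite ev !inE eqxx.
  by apply/negP => /and3P [/eqP eu]; move: uS; rewrite eu !inE eqxx.
- move=> v; case: (eqVneq v u0) => [->|nv].
    apply: leq_trans du0; apply: subset_leq_card; apply/subsetP => a.
    rewrite !inE => /orP [/oS' /andP [_]|/and3P [_ aS e]]; first by rewrite !inE eqxx.
    by move: aS => /andP [_ ->]; rewrite sE e.
  apply: leq_trans (h4 v); apply: subset_leq_card; apply/subsetP => a.
  by rewrite !inE /= orbF.
Qed.

Lemma color E D : symmetric E -> irreflexive E ->
  (forall S, S != set0 -> exists2 u, u \in S & deg E S u <= D) ->
  exists col : V -> 'I_D.+1, forall u v, E u v -> col u != col v.
Proof.
move=> sE iE hd.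
suff : forall n S, #|S| <= n -> exists col : V -> 'I_D.+1,
    forall u v, u \in S -> v \in S -> E u v -> col u != col v.
  move=> /(_ #|[set: V]| setT (leqnn _)) [col h]; exists col => u v; apply: h; by rewrite inE.
elim=> [|n IH] S hS.
  exists (fun _ => ord0) => u v uS; move: hS; rewrite leqn0 cards_eq0 => /eqP S0.
  by move: uS; rewrite S0 inE.
case: (eqVneq S set0) => [S0|S0].
  by exists (fun _ => ord0) => u v; rewrite S0 inE.
have [u0 u0S du0] := hd S S0.
have hS' : #|S :\ u0| <= n by have := cardsD1 u0 S; rewrite u0S /=; lia.
have [col h] := IH _ hS'.
set Used := [set col w | w in nb E S u0].
have : 0 < #|~: Used|.
  have := cardsC Used; rewrite card_ord; have := leq_imset_card col (nb E S u0).
  rewrite -/Used; move: du0; rewrite /deg; lia.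
rewrite card_gt0 => /set0Pn [c cU].
exists (fun a => if a == u0 then c else col a) => u v uS vS e.
have nUsed : forall w, w \in S -> E u0 w -> c != col w.
  move=> w wS ew; move: cU; rewrite inE => cU; apply: contraNneq cU => ->.
  by apply: imset_f; rewrite inE wS ew.
case: (eqVneq u u0) => [eu|nu].
  have nv : v != u0 by apply: contraTneq e => ->; rewrite eu iE.
  rewrite (negbTE nv) /=; apply: nUsed => //; by rewrite -eu.
case: (eqVneq v u0) => [ev|nv].
  rewrite /= eq_sym; apply: nUsed => //; by rewrite sE -ev.
apply: h => //; by rewrite !inE ?nu ?nv.
Qed.

End Orient.


Lemma card_bigcup_leP (V I : finType) (P : pred I) (F : I -> {set V}) :
  #|\bigcup_(i | P i) F i| <= \sum_(i | P i) #|F i|.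
Proof.
apply: (big_ind2 (fun (X : {set V}) n => #|X| <= n)) => //.
  by rewrite cards0.
move=> X1 n1 X2 n2 h1 h2; apply: leq_trans (leq_card_setU X1 X2) _.
exact: leq_add.
Qed.

Section Frat.
Variable V : finType.
Implicit Types (E : rel V) (R S N : {set V}).
Variable G : rel V.
Hypothesis sG : symmetric G.
Hypothesis iG : irreflexive G.
Variable t : nat.
Hypothesis noK : ~ kmin G setT t.+1.
Variable o : rel V.
Variable d : nat.
Hypothesis oG : forall u v, o u v -> G u v.
Hypothesis oin : forall v, #|[set u | o u v]| <= d.

Definition inn v := [set u | o u v].

Definition G2 : rel V := fun u w => (u != w) && [|| G u w, [exists v, o u v && o v w],
   [exists v, o w v && o v u] | [exists v, o u v && o w v]].

Lemma G2_sym : symmetric G2.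
Proof.
move=> u w; rewrite /G2 eq_sym sG.
have -> : [exists v, o w v && o u v] = [exists v, o u v && o w v].
  by apply/existsP/existsP => -[v h]; exists v; rewrite andbC.
by case: (w != u); case: (G w u); case: [exists v, o u v && o v w];
   case: [exists v, o w v && o v u].
Qed.

Lemma G2_irr : irreflexive G2.
Proof. by move=> u; rewrite /G2 eqxx. Qed.

Lemma G2_G u w : G u w -> G2 u w.
Proof.
move=> e; rewrite /G2 e andbT; apply: contraTneq e => ->; by rewrite iG.
Qed.

Definition Bi S (i : nat) z :=
  z |: [set v | (v \notin S) && o z v && (index z (enum (inn v)) == i)].
Definition Mi S i : rel V := fun u w =>
  (u != w) && [exists a in Bi S i u, exists b in Bi S i w, G a b].

Lemma Mi_sym S i : symmetric (Mi S i).
Proof.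
move=> u w; rewrite /Mi eq_sym; congr (_ && _).
apply/exists_inP/exists_inP => -[a aB /exists_inP [b bB e]]; exists b => //;
  apply/exists_inP; exists a => //; by rewrite sG.
Qed.

Lemma Mi_irr S i : irreflexive (Mi S i).
Proof. by move=> u; rewrite /Mi eqxx. Qed.

Lemma Mi_sparse S i : ne (Mi S i) S <= 2 ^ t * #|S|.
Proof.
apply: sparse (@Mi_sym S i) (@Mi_irr S i) _ => hk; apply: noK.
apply: (lift_kmin (E' := Mi S i) (R := S) (B := Bi S i)) hk => //.
- by move=> u _; rewrite /Bi setU11.
- move=> u _; apply: (star_conn (c := u)) => //; first by rewrite /Bi setU11.
  move=> a; rewrite /Bi !inE => /orP [/eqP -> |/andP [/andP [_ oua] _]].
    by rewrite eqxx.
  by move=> _; exact: oG.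
- move=> u w uS wS uw; rewrite -setI_eq0; apply/eqP/setP => a; rewrite /Bi !inE.
  apply/negbTE/negP => /andP [/orP [/eqP au | /andP [/andP [aS oua] iu]]
                              /orP [/eqP aw | /andP [/andP [aS' owa] iw]]].
  + by move: uw; rewrite -au -aw eqxx.
  + by move: aS'; rewrite au uS.
  + by move: aS; rewrite aw wS.
  + have uin : u \in enum (inn a) by rewrite mem_enum inE.
    have win : w \in enum (inn a) by rewrite mem_enum inE.
    have := nth_index u uin; rewrite (eqP iu) -(eqP iw) nth_index // => wu.
    by move: uw; rewrite wu eqxx.
- move=> u w _ _ /andP [_ /exists_inP [a aB /exists_inP [b bB e]]].
  by exists a, b.
Qed.

Definition T1 S u := [set w in S | [exists v, o u v && o v w]].
Definition T2 S w := [set u in S | [exists v, o u v && o v w]].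
Definition Fi S u := [set w in S | [exists v in S, o u v && o w v]].

Lemma nbG2_sub S u : u \in S ->
  nb G2 S u \subset ((((nb G S u :|: T1 S u) :|: T2 S u) :|: Fi S u)
                       :|: \bigcup_(i < d) nb (Mi S i) S u).
Proof.
move=> uS; apply/subsetP => w; rewrite inE => /andP [wS /andP [uw /or4P [e|e|e|e]]];
  rewrite !in_setU.
- by rewrite !inE wS e.
- by rewrite !inE wS e !orbT.
- by rewrite [w \in T2 S u]inE wS e !orbT.
- move/existsP: e => [v /andP [ouv owv]]; case vS: (v \in S).
    have -> : w \in Fi S u by rewrite inE wS; apply/exists_inP; exists v => //; rewrite ouv owv.
    by rewrite orbT.
  have uin : u \in enum (inn v) by rewrite mem_enum inE.
  have lt : index u (enum (inn v)) < d.
    by apply: leq_trans (oin v); rewrite cardE index_mem.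
  apply/orP; right; apply/bigcupP; exists (Ordinal lt) => //.
  rewrite inE wS /Mi uw /=; apply/exists_inP; exists v.
    by rewrite /Bi !inE vS ouv eqxx orbT.
  apply/exists_inP; exists w; first by rewrite /Bi setU11.
  by rewrite sG oG.
Qed.

Definition D2 := 2 ^ t + d * d + d * d + d * d + d * 2 ^ t.

Lemma G2_dens S : ne G2 S <= D2 * #|S|.
Proof.
have step : forall u, u \in S -> deg G2 S u <=
   deg G S u + #|T1 S u| + #|T2 S u| + #|Fi S u| + \sum_(i < d) deg (Mi S i) S u.
  move=> u uS; apply: leq_trans (subset_leq_card (nbG2_sub uS)) _.
  apply: leq_trans (leq_card_setU _ _) _; apply: leq_add; last exact: card_bigcup_leP.
  apply: leq_trans (leq_card_setU _ _) _; apply: leq_add => //.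
  apply: leq_trans (leq_card_setU _ _) _; apply: leq_add => //.
  exact: leq_card_setU.
have h0 : ne G2 S <= \sum_(u in S) (deg G S u + #|T1 S u| + #|T2 S u| + #|Fi S u|
                                     + \sum_(i < d) deg (Mi S i) S u).
  by apply: leq_sum => u uS; exact: step.
rewrite !big_split /= in h0.
change (\sum_(u in S) deg G S u) with (ne G S) in h0.
have hG : ne G S <= 2 ^ t * #|S|.
  apply: sparse sG iG _ => hk; apply: noK; apply: sub_kmin hk _; exact: subsetT.
have hT : \sum_(u in S) #|T1 S u| <= d * d * #|S|.
  have e1 := double_count S (fun u w => [exists v, o u v && o v w]); simpl in e1.
  rewrite /T1 e1.
  apply: (@leq_trans (\sum_(w in S) d * d)); last by rewrite sum_nat_const mulnC.
  apply: leq_sum => w wS.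
  apply: (@leq_trans #|\bigcup_(v in inn w) inn v|).
    apply: subset_leq_card; apply/subsetP => x; rewrite inE.
    move=> /andP [_ /existsP [v /andP [oxv ovw]]]; apply/bigcupP; exists v; by rewrite inE.
  apply: leq_trans (card_bigcup_le _ _) _.
  apply: (@leq_trans (\sum_(v in inn w) d)).
    by apply: leq_sum => v _; exact: oin.
  rewrite sum_nat_const; apply: leq_mul => //; exact: oin.
have hT2 : \sum_(u in S) #|T2 S u| <= d * d * #|S|.
  apply: (@leq_trans (\sum_(w in S) d * d)); last by rewrite sum_nat_const mulnC.
  apply: leq_sum => w wS.
  apply: (@leq_trans #|\bigcup_(v in inn w) inn v|).
    apply: subset_leq_card; apply/subsetP => x; rewrite inE.
    move=> /andP [_ /existsP [v /andP [oxv ovw]]]; apply/bigcupP; exists v; by rewrite inE.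
  apply: leq_trans (card_bigcup_le _ _) _.
  apply: (@leq_trans (\sum_(v in inn w) d)).
    by apply: leq_sum => v _; exact: oin.
  rewrite sum_nat_const; apply: leq_mul => //; exact: oin.
have hF : \sum_(u in S) #|Fi S u| <= d * d * #|S|.
  apply: (@leq_trans (\sum_(u in S) d * #|[set v in S | o u v]|)).
    apply: leq_sum => u uS.
    apply: (@leq_trans #|\bigcup_(v in [set v in S | o u v]) inn v|).
      apply: subset_leq_card; apply/subsetP => w; rewrite inE.
      move=> /andP [_ /exists_inP [v vS /andP [ouv owv]]].
      by apply/bigcupP; exists v; rewrite !inE ?vS ?ouv ?owv.
    apply: leq_trans (card_bigcup_le _ _) _.
    apply: (@leq_trans (\sum_(v in [set v in S | o u v]) d)).
      by apply: leq_sum => v _; exact: oin.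
    by rewrite sum_nat_const mulnC.
  rewrite -big_distrr /=.
  have e2 := double_count S (fun u v => o u v); simpl in e2; rewrite e2.
  rewrite -mulnA; apply: leq_mul => //.
  apply: (@leq_trans (\sum_(v in S) d)); last by rewrite sum_nat_const mulnC.
  apply: leq_sum => v _; apply: leq_trans (oin v); apply: subset_leq_card.
  by apply/subsetP => x; rewrite !inE => /andP [].
have hM : \sum_(u in S) \sum_(i < d) deg (Mi S i) S u <= d * 2 ^ t * #|S|.
  rewrite exchange_big /=.
  apply: (@leq_trans (\sum_(i < d) 2 ^ t * #|S|)).
    by apply: leq_sum => i _; exact: Mi_sparse.
  by rewrite sum_nat_const card_ord mulnA.
apply: leq_trans h0 _; rewrite /D2 !mulnDl; by repeat apply: leq_add.
Qed.

Lemma G2_color : exists col : V -> 'I_D2.+1, forall u v, G2 u v -> col u != col v.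
Proof.
apply: color G2_sym G2_irr _ => S S0; exact: low_deg S0 (G2_dens S).
Qed.

End Frat.


Section Box.
Variable V : finType.
Variable G : rel V.
Hypothesis sG : symmetric G.
Hypothesis iG : irreflexive G.
Variable o : rel V.
Hypothesis oG : forall u v, o u v -> G u v.
Hypothesis ocov : forall u v, G u v -> o u v || o v u.
Hypothesis oanti : forall u v, o u v -> ~~ o v u.
Variable K : nat.
Variable col : V -> 'I_K.
Hypothesis colp : forall u v, G2 G o u v -> col u != col v.
Variables p q : nat.

Definition inP v := (col v == p :> nat) || (col v == q :> nat).
Definition leaf v := [exists b, inP b && o b v].
Definition par v := odflt v [pick b | inP b && o b v].
Definition nN := #|V|.
Definition idv (v : V) : nat := enum_rank v.
Definition lo v := if inP v then (if leaf v then 2 * nN * idv (par v) + idv v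
                                  else 2 * nN * idv v) else 0.
Definition hi v := if inP v then (if leaf v then 2 * nN * idv (par v) + idv v
                                  else 2 * nN * idv v + nN) else 2 * nN * nN.

Lemma idv_lt v : idv v < nN. Proof. exact: ltn_ord. Qed.
Lemma idv_inj : injective idv.
Proof. by move=> u v /val_inj; exact: enum_rank_inj. Qed.

Lemma parP v : leaf v -> inP (par v) && o (par v) v.
Proof.
rewrite /leaf /par; case: pickP => [b h|h] //=.
by move/existsP => [b hb]; rewrite h in hb.
Qed.

Lemma L1 a b c : inP a -> inP b -> inP c -> o b a -> G a c -> c != b -> False.
Proof.
move=> ha hb hc oba gac cb.
have gab : G a b by rewrite sG; exact: oG.
have h1 := colp (G2_G iG o gab).
have h2 := colp (G2_G iG o gac).
have h3 : G2 G o b c.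
  rewrite /G2 eq_sym cb /=; case/orP: (ocov gac) => h.
    by apply/or4P; apply: Or42; apply/existsP; exists a; rewrite oba h.
  by apply/or4P; apply: Or44; apply/existsP; exists a; rewrite oba h.
have := colp h3.
move: h1 h2 ha hb hc; rewrite /inP -!val_eqE /=.
move=> h1 h2 /orP [] /eqP ha /orP [] /eqP hb /orP [] /eqP hc; lia.
Qed.

Lemma leaf_par_adj v c : leaf v -> inP v -> inP c -> G v c -> c = par v.
Proof.
move=> lv iv ic gvc; case/andP: (parP lv) => ip op.
case: (eqVneq c (par v)) => // cb.
exfalso; exact: L1 iv ip ic op gvc cb.
Qed.

Lemma par_notleaf v : leaf v -> inP v -> ~~ leaf (par v).
Proof.
move=> lv iv; case/andP: (parP lv) => ip op; apply/negP => lb.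
case/andP: (parP lb) => ip2 op2.
apply: (L1 ip ip2 iv op2 (oG op)).
apply/eqP => e; move: op2; rewrite -e => ovb.
by move: (oanti op); rewrite ovb.
Qed.

Lemma oriented_ok u v : inP u -> inP v -> o u v -> (lo u <= hi v) && (lo v <= hi u).
Proof.
move=> iu iv ouv.
have lv : leaf v by apply/existsP; exists u; rewrite iu ouv.
have pv : par v = u.
  by symmetry; apply: leaf_par_adj => //; rewrite sG; exact: oG.
have nlu : ~~ leaf u by rewrite -pv; exact: par_notleaf.
rewrite /lo /hi iu iv lv (negbTE nlu) pv.
apply/andP; split; first exact: leq_addr.
by rewrite leq_add2l; apply: ltnW; exact: idv_lt.
Qed.

Lemma lo_bound v : lo v <= 2 * nN * nN.
Proof.
rewrite /lo; case: (inP v) => //; case: (leaf v).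
  by have := idv_lt (par v); have := idv_lt v; nia.
by have := idv_lt v; nia.
Qed.

Lemma lo_out v : ~~ inP v -> lo v = 0.
Proof. by rewrite /lo => /negbTE ->. Qed.
Lemma hi_out v : ~~ inP v -> hi v = 2 * nN * nN.
Proof. by rewrite /hi => /negbTE ->. Qed.

Lemma dim_ok u v : G u v -> (lo u <= hi v) && (lo v <= hi u).
Proof.
move=> g.
case iu: (inP u); case iv: (inP v).
- case/orP: (ocov g) => h; first exact: oriented_ok.
  by rewrite andbC; apply: oriented_ok.
- by rewrite (hi_out (negbT iv)) (lo_out (negbT iv)) lo_bound.
- by rewrite (hi_out (negbT iu)) (lo_out (negbT iu)) lo_bound.
- by rewrite (hi_out (negbT iu)) (lo_out (negbT iu)) (hi_out (negbT iv)) (lo_out (negbT iv)).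
Qed.

Lemma blk a b x y : x < 2 * nN -> y < 2 * nN -> 2 * nN * a + x <= 2 * nN * b + y -> a <= b.
Proof. nia. Qed.

Lemma dim_ok2 u v : u != v -> inP u -> inP v -> (lo u <= hi v) && (lo v <= hi u) -> G u v.
Proof.
move=> uv iu iv; rewrite /lo /hi iu iv.
have Npos : 0 < nN := leq_ltn_trans (leq0n _) (idv_lt u).
have hu := idv_lt u; have hv := idv_lt v.
case lu: (leaf u); case lv: (leaf v) => /andP [h1 h2].
- exfalso; have hpu := idv_lt (par u); have hpv := idv_lt (par v).
  have e1 : idv (par u) <= idv (par v) by apply: (blk (x := idv u) (y := idv v)); nia.
  have e2 : idv (par v) <= idv (par u) by apply: (blk (x := idv v) (y := idv u)); nia.
  have ep : idv (par u) = idv (par v) by lia.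
  rewrite ep in h1; have e : idv u = idv v by lia.
  by move: uv; rewrite (idv_inj e) eqxx.
- have e1 : idv (par u) <= idv v by apply: (blk (x := idv u) (y := nN)); nia.
  have e2 : idv v <= idv (par u) by apply: (blk (x := 0) (y := idv u)); nia.
  have e : idv (par u) = idv v by lia.
  have /andP [_] := parP lu; rewrite (idv_inj e).
  by move=> /oG; rewrite sG.
- have e1 : idv u <= idv (par v) by apply: (blk (x := 0) (y := idv v)); nia.
  have e2 : idv (par v) <= idv u by apply: (blk (x := idv v) (y := nN)); nia.
  have e : idv (par v) = idv u by lia.
  have /andP [_] := parP lv; rewrite (idv_inj e).
  by move=> /oG.
- exfalso.
  have e1 : idv u <= idv v by apply: (blk (x := 0) (y := nN)); nia.
  have e2 : idv v <= idv u by apply: (blk (x := 0) (y := nN)); nia.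
  have e : idv u = idv v by lia.
  by move: uv; rewrite (idv_inj e) eqxx.
Qed.

Lemma lo_hi v : lo v <= hi v.
Proof. by rewrite /lo /hi; case: (inP v); case: (leaf v) => //; rewrite leq_addr. Qed.

End Box.

From HB Require Import structures.
From mathcomp Require Import all_boot all_order all_algebra.
From mathcomp Require Import all_classical all_reals all_analysis.
From mathcomp Require Import Rstruct Rstruct_topology.
From Stdlib Require Import Classical.
Import Order.TTheory GRing.Theory Num.Theory.

Section BoxReal.
Local Open Scope ring_scope.
Lemma box_of_nat (V : finType) (E : rel V) (b : nat) (L H : V -> 'I_b -> nat) :
  (forall v i, (L v i <= H v i)%N) ->
  (forall u v, u != v -> (E u v <-> forall i, (L u i <= H v i)%N && (L v i <= H u i)%N)) ->
  box_rep E b.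
Proof.
move=> hLH hE.
exists (fun v i => (L v i)%:R : RR), (fun v i => (H v i)%:R : RR); split.
  by move=> v i; rewrite ler_nat.
move=> u v uv; rewrite hE //; split.
- move=> h; exists (fun i => (maxn (L u i) (L v i))%:R : RR) => i.
  have /andP [h1 h2] := h i.
  rewrite !ler_nat !leq_max !geq_max !leqnn !hLH h1 h2 /=; by rewrite ?orbT.
- move=> [x hx] i; have [/andP [a1 a2] /andP [b1 b2]] := hx i.
  by apply/andP; split; rewrite -(ler_nat RR); [exact: le_trans a1 b2 | exact: le_trans b1 a2].
Qed.
End BoxReal.

Lemma kmin_minor (VH VG : finType) (EH : rel VH) (EG : rel VG) :
  irreflexive EH -> kmin EG (setTfor VG) #|VH|.+1 -> is_minor EH EG.
Proof.
move=> iH [phi [ne0 _ cn dj adj]].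
pose f (x : VH) : 'I_#|VH|.+1 := widen_ord (leqnSn _) (enum_rank x).
have finj : forall x y, x != y -> f x != f y.
  move=> x y xy; apply/eqP => e; move/eqP: xy; apply.
  apply: enum_rank_inj; apply: val_inj; exact: (congr1 val e).
exists (fun x => phi (f x)); split.
- by move=> x; exact: ne0.
- by move=> x; exact: cn.
- by move=> x y xy; apply: dj; exact: finj.
- move=> x y e; apply: adj; apply: finj.
  by apply: contraTneq e => ->; rewrite iH.
Qed.

Theorem theorem11 :
  forall (VH : finType) (EH : rel VH),
    simple_graph EH -> planar EH ->
    exists c : nat,
      forall (VG : finType) (EG : rel VG),
        simple_graph EG -> boxicity_ge EG c -> is_minor EH EG.
Proof.
move=> VH EH [sH iH] _.
pose t := #|VH|.
pose K := (D2 t (2 ^ t)).+1.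
exists (K * K).+1 => VG EG [sG iG] hb.
case: (classic (kmin EG (setTfor VG) t.+1)) => [hk|noK].
  exact: kmin_minor.
exfalso.
have hd : forall S : {set VG}, S != finset.set0 -> exists2 u, u \in S & (deg EG S u <= 2 ^ t)%N.
  move=> S S0; apply: low_deg S0 _; apply: sparse sG iG _ => hk; apply: noK.
  by apply: sub_kmin hk _; exact: finset.subsetT.
have [ori [oG ocov oanti oin]] := orient sG iG hd.
have [col colp] := G2_color sG iG noK oG oin.
have : box_rep EG (K * K).
  apply: (@box_of_nat _ _ _ (fun v i => lo ori col (i %/ K) (i %% K) v)
                            (fun v i => hi ori col (i %/ K) (i %% K) v)).
    by move=> v i; exact: lo_hi.
  move=> u v uv; split.
    by move=> e i; exact: (dim_ok sG iG oG ocov oanti colp).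
  move=> h.
  have lt : (col u * K + col v < K * K)%N.
    have := ltn_ord (col u); have := ltn_ord (col v); nia.
  have := h (Ordinal lt) => /=.
  have Kpos : (0 < K)%N by [].
  rewrite divnMDl // divn_small ?ltn_ord // addn0 modnMDl modn_small ?ltn_ord //.
  apply: (dim_ok2 sG oG uv); by rewrite /inP eqxx ?orbT.
move/hb; rewrite ltnn.
by [].
Qed.
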